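(* Let $(G,\mathcal{B}_1,\mathcal{B}_2)$ be a Rota-Baxter system of groups, and set $G_1=\mathcal{B}_1(G)$, $G_2=\mathcal{B}_2(G)$, $H_1=\mathcal{B}_1(\operatorname{Ker}(\mathcal{B}_2))$, $H_2=\mathcal{B}_2(\operatorname{Ker}(\mathcal{B}_1))$, where $\operatorname{Ker}(\mathcal{B}_i)=\{a\in G\mid\mathcal{B}_i(a)=1_G\}$. Then $H_1$ is a normal subgroup of the group $G_1$, $H_2$ is a normal subgroup of the group $G_2$, and the map $\Theta:G_1/H_1\to G_2/H_2$, $\Theta(\mathcal{B}_1(a)H_1)=\mathcal{B}_2(a)H_2$ for $a\in G$, is well defined and is a group anti-isomorphism (a bijection with $\Theta(xy)=\Theta(y)\Theta(x)$).
   Context: A Rota-Baxter system of groups is a triple $(G,\mathcal{B}_1,\mathcal{B}_2)$ where $G$ is a group with identity $1_G$ and $\mathcal{B}_1,\mathcal{B}_2:G\to G$ are maps such that for all $a,b\in G$: $\mathcal{B}_1(a)\mathcal{B}_1(b)=\mathcal{B}_1(\mathcal{B}_1(a)b\mathcal{B}_2(a))$ and $\mathcal{B}_2(b)\mathcal{B}_2(a)=\mathcal{B}_2(\mathcal{B}_1(a)b\mathcal{B}_2(a))$. *)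

(* Defs.v *)
From HB Require Import structures.
From mathcomp Require Import all_boot.
Set Implicit Arguments. Unset Strict Implicit. Unset Printing Implicit Defensive.
Local Open Scope group_scope.

Section RBS.
Variable G : groupType.

Definition RB_system (B1 B2 : G -> G) : Prop :=
  forall a b : G,
    B1 a * B1 b = B1 (B1 a * b * B2 a) /\
    B2 b * B2 a = B2 (B1 a * b * B2 a).

Definition img (f : G -> G) (S : G -> Prop) : G -> Prop :=
  fun y => exists x, S x /\ f x = y.

Definition fullset : G -> Prop := fun _ => True.

Definition kerm (f : G -> G) : G -> Prop := fun a => f a = 1.

Definition is_subgroup (H K : G -> Prop) : Prop :=
  (forall x, H x -> K x) /\ H 1 /\
  (forall x y, H x -> H y -> H (x * y)) /\
  (forall x, H x -> H x^-1).

Definition is_normal_subgroup (H K : G -> Prop) : Prop :=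
  is_subgroup H K /\ forall x h, K x -> H h -> H (x^-1 * h * x).

Definition lcoset (x : G) (H : G -> Prop) : G -> Prop :=
  fun y => exists h, H h /\ y = x * h.

(* elementwise product of subsets (product in the quotient group) *)
Definition setmul (C D : G -> Prop) : G -> Prop :=
  fun y => exists c d, C c /\ D d /\ y = c * d.

Definition quot_elem (K H : G -> Prop) (C : G -> Prop) : Prop :=
  exists x, K x /\ C = lcoset x H.

End RBS.

(* Main.v *)
Require Import Defs.
From HB Require Import structures.
From mathcomp Require Import all_boot.
From Stdlib Require Import FunctionalExtensionality PropExtensionality.
Local Open Scope group_scope.

Definition rop {G : groupType} (B1 B2 : G -> G) (a b : G) := B1 a * b * B2 a.
Definition rb0 {G : groupType} (B1 B2 : G -> G) : G := (B1 1)^-1 * (B2 1)^-1.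
Definition ry {G : groupType} (B1 B2 : G -> G) (a : G) : G :=
  (B1 a)^-1 * rb0 B1 B2 * (B2 a)^-1.

Lemma rb0_1 {G : groupType} {B1 B2 : G -> G} : RB_system B1 B2 ->
  B1 (rb0 B1 B2) = 1 /\ B2 (rb0 B1 B2) = 1.
Proof.
move=> h; have [h1 h2] := h 1 (rb0 B1 B2).
have e : B1 1 * rb0 B1 B2 * B2 1 = 1.
  by rewrite /rb0 mulgA mulgV mul1g mulVg.
rewrite e in h1 h2; split.
- by apply: (mulgI (B1 1)); rewrite h1 mulg1.
- by apply: (mulIg (B2 1)); rewrite h2 mul1g.
Qed.

Lemma ry_B {G : groupType} {B1 B2 : G -> G} (a : G) : RB_system B1 B2 ->
  B1 (ry B1 B2 a) = (B1 a)^-1 /\ B2 (ry B1 B2 a) = (B2 a)^-1.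
Proof.
move=> h; have [h1 h2] := h a (ry B1 B2 a); have [e1 e2] := rb0_1 h.
have e : B1 a * ry B1 B2 a * B2 a = rb0 B1 B2.
  by rewrite /ry !mulgA mulgV mul1g mulgVK.
rewrite e e1 in h1; rewrite e e2 in h2; split.
- by apply: (mulgI (B1 a)); rewrite h1 mulgV.
- by apply: (mulIg (B2 a)); rewrite h2 mulVg.
Qed.

Lemma lcoset_eq {G : groupType} {H K : G -> Prop} {x y : G} : is_subgroup H K ->
  lcoset x H = lcoset y H <-> H (x^-1 * y).
Proof.
move=> [_ [H1 [HM HV]]]; split.
- move=> e; have : lcoset y H y by exists 1; rewrite mulg1.
  by rewrite -e => -[h [Hh ->]]; rewrite mulKg.
- move=> Hxy; apply: functional_extensionality => z; apply: propositional_extensionality.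
  split => -[h [Hh ->]].
  + exists ((x^-1 * y)^-1 * h); split; first by apply: HM => //; apply: HV.
    by rewrite invgM invgK !mulgA mulgV mul1g.
  + exists ((x^-1 * y) * h); split; first by apply: HM.
    by rewrite !mulgA mulgV mul1g.
Qed.

Lemma setmul_lcoset {G : groupType} {H K : G -> Prop} {x y : G} :
  is_normal_subgroup H K -> K y ->
  setmul (lcoset x H) (lcoset y H) = lcoset (x * y) H.
Proof.
move=> [[_ [H1 [HM HV]]] HN] Ky.
apply: functional_extensionality => z; apply: propositional_extensionality.
split.
- move=> [c [d [[h [Hh ->]] [[h' [Hh' ->]] ->]]]].
  exists ((y^-1 * h * y) * h'); split; first by apply: HM => //; apply: HN.
  by rewrite !mulgA mulgK.
- move=> [h [Hh ->]]; exists x, (y * h); split; first by exists 1; rewrite mulg1.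
  by split; [exists h | rewrite mulgA].
Qed.

Lemma G1_sub {G : groupType} {B1 B2 : G -> G} : RB_system B1 B2 ->
  is_subgroup (img B1 (@fullset G)) (@fullset G).
Proof.
move=> h; have [e1 e2] := rb0_1 h; split=> //; split; first by exists (rb0 B1 B2).
split.
- move=> _ _ [a [_ <-]] [b [_ <-]]; exists (rop B1 B2 a b); split=> //.
  by rewrite /rop -(proj1 (h a b)).
- move=> _ [a [_ <-]]; exists (ry B1 B2 a); split=> //; exact: (proj1 (ry_B a h)).
Qed.

Lemma G2_sub {G : groupType} {B1 B2 : G -> G} : RB_system B1 B2 ->
  is_subgroup (img B2 (@fullset G)) (@fullset G).
Proof.
move=> h; have [e1 e2] := rb0_1 h; split=> //; split; first by exists (rb0 B1 B2).
split.
- move=> _ _ [a [_ <-]] [b [_ <-]]; exists (rop B1 B2 b a); split=> //.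
  by rewrite /rop -(proj2 (h b a)).
- move=> _ [a [_ <-]]; exists (ry B1 B2 a); split=> //; exact: (proj2 (ry_B a h)).
Qed.

Lemma H1_norm {G : groupType} {B1 B2 : G -> G} : RB_system B1 B2 ->
  is_normal_subgroup (img B1 (kerm B2)) (img B1 (@fullset G)).
Proof.
move=> h; have [e1 e2] := rb0_1 h; split; first split.
- by move=> _ [a [_ <-]]; exists a.
split; first by exists (rb0 B1 B2).
split.
- move=> _ _ [a [Ka <-]] [b [Kb <-]]; exists (rop B1 B2 a b); split.
    by rewrite /kerm /rop -(proj2 (h a b)) Ka Kb mulg1.
  by rewrite /rop -(proj1 (h a b)).
- move=> _ [a [Ka <-]]; have [f1 f2] := ry_B a h; exists (ry B1 B2 a); split=> //.
  by rewrite /kerm f2 Ka invg1.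
- move=> _ _ [c [_ <-]] [k [Kk <-]]; have [f1 f2] := ry_B c h.
  exists (rop B1 B2 (rop B1 B2 (ry B1 B2 c) k) c); split.
    by rewrite /kerm /rop -(proj2 (h _ c)) -(proj2 (h _ k)) Kk f2 mul1g mulgV.
  by rewrite /rop -(proj1 (h _ c)) -(proj1 (h _ k)) f1.
Qed.

Lemma H2_norm {G : groupType} {B1 B2 : G -> G} : RB_system B1 B2 ->
  is_normal_subgroup (img B2 (kerm B1)) (img B2 (@fullset G)).
Proof.
move=> h; have [e1 e2] := rb0_1 h; split; first split.
- by move=> _ [a [_ <-]]; exists a.
split; first by exists (rb0 B1 B2).
split.
- move=> _ _ [a [Ka <-]] [b [Kb <-]]; exists (rop B1 B2 b a); split.
    by rewrite /kerm /rop -(proj1 (h b a)) Ka Kb mulg1.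
  by rewrite /rop -(proj2 (h b a)).
- move=> _ [a [Ka <-]]; have [f1 f2] := ry_B a h; exists (ry B1 B2 a); split=> //.
  by rewrite /kerm f1 Ka invg1.
- move=> _ _ [c [_ <-]] [k [Kk <-]]; have [f1 f2] := ry_B c h.
  exists (rop B1 B2 c (rop B1 B2 k (ry B1 B2 c))); split.
    by rewrite /kerm /rop -(proj1 (h c _)) -(proj1 (h k _)) Kk f1 mul1g mulgV.
  by rewrite /rop -(proj2 (h c _)) -(proj2 (h k _)) f2.
Qed.

Lemma key {G : groupType} {B1 B2 : G -> G} (w : G) : RB_system B1 B2 ->
  img B1 (kerm B2) (B1 w) <-> img B2 (kerm B1) (B2 w).
Proof.
move=> h; split.
- move=> [k [Kk ek]]; have [f1 f2] := ry_B k h.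
  exists (rop B1 B2 w (ry B1 B2 k)); split.
    by rewrite /kerm /rop -(proj1 (h w _)) f1 ek mulgV.
  by rewrite /rop -(proj2 (h w _)) f2 Kk invg1 mul1g.
- move=> [k [Kk ek]]; have [f1 f2] := ry_B k h.
  exists (rop B1 B2 (ry B1 B2 k) w); split.
    by rewrite /kerm /rop -(proj2 (h _ w)) f2 ek mulgV.
  by rewrite /rop -(proj1 (h _ w)) f1 Kk invg1 mul1g.
Qed.

Lemma wd {G : groupType} {B1 B2 : G -> G} (a a' : G) : RB_system B1 B2 ->
  lcoset (B1 a) (img B1 (kerm B2)) = lcoset (B1 a') (img B1 (kerm B2)) <->
  lcoset (B2 a) (img B2 (kerm B1)) = lcoset (B2 a') (img B2 (kerm B1)).
Proof.
move=> h; have [n1 _] := H1_norm h; have [[s2 [_ [M2 V2]]] N2] := H2_norm h.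
rewrite (lcoset_eq n1) (lcoset_eq (proj1 (H2_norm h))).
have [f1 f2] := ry_B a h.
have -> : (B1 a)^-1 * B1 a' = B1 (rop B1 B2 (ry B1 B2 a) a').
  by rewrite /rop -(proj1 (h _ a')) f1.
rewrite key //. rewrite /rop -(proj2 (h _ a')) f2.
split => H.
- have := N2 (B2 a) _ (ex_intro _ a (conj I erefl)) H.
  by rewrite mulgA mulgVK.
- have := N2 (B2 (ry B1 B2 a)) _ (ex_intro _ (ry B1 B2 a) (conj I erefl)) H.
  by rewrite f2 invgK mulgA mulgV mul1g.
Qed.

Theorem proposition5p4 (G : groupType) (B1 B2 : G -> G) :
  RB_system B1 B2 ->
  let G1 := img B1 (@fullset G) in
  let G2 := img B2 (@fullset G) in
  let H1 := img B1 (kerm B2) in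
  let H2 := img B2 (kerm B1) in
  is_subgroup G1 (@fullset G) /\ is_subgroup G2 (@fullset G) /\
  is_normal_subgroup H1 G1 /\ is_normal_subgroup H2 G2 /\
  exists Theta : (G -> Prop) -> (G -> Prop),
    (* Theta (B1(a) H1) = B2(a) H2 for all a (well-definedness) *)
    (forall a : G, Theta (lcoset (B1 a) H1) = lcoset (B2 a) H2) /\
    (* Theta maps G1/H1 into G2/H2 *)
    (forall C, quot_elem G1 H1 C -> quot_elem G2 H2 (Theta C)) /\
    (* bijective *)
    (forall C D, quot_elem G1 H1 C -> quot_elem G1 H1 D ->
       Theta C = Theta D -> C = D) /\
    (forall E, quot_elem G2 H2 E -> exists C, quot_elem G1 H1 C /\ Theta C = E) /\
    (* anti-homomorphism *)
    (forall C D, quot_elem G1 H1 C -> quot_elem G1 H1 D ->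
       Theta (setmul C D) = setmul (Theta D) (Theta C)).
Proof.
move=> h G1 G2 H1 H2.
split; first exact: G1_sub. split; first exact: G2_sub.
split; first exact: H1_norm. split; first exact: H2_norm.
pose Theta := fun C : G -> Prop => fun z =>
  exists a, C = lcoset (B1 a) H1 /\ lcoset (B2 a) H2 z.
have TE : forall a, Theta (lcoset (B1 a) H1) = lcoset (B2 a) H2.
  move=> a; apply: functional_extensionality => z; apply: propositional_extensionality.
  split; last by move=> Hz; exists a.
  by move=> [a' [e Hz]]; rewrite ((wd a a' h).1 e).
exists Theta; split; first exact: TE.
split.
  by move=> C [_ [[a [_ <-]] ->]]; rewrite TE; exists (B2 a); split=> //; exists a.
split.
  move=> C D [_ [[a [_ <-]] ->]] [_ [[b [_ <-]] ->]]; rewrite !TE => e.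
  exact: (wd a b h).2.
split.
  move=> E [_ [[a [_ <-]] ->]]; exists (lcoset (B1 a) H1); split; last exact: TE.
  by exists (B1 a); split=> //; exists a.
move=> C D [_ [[a [_ <-]] ->]] [_ [[b [_ <-]] ->]].
rewrite (setmul_lcoset (H1_norm h)); last by exists b.
rewrite (proj1 (h a b)) !TE (setmul_lcoset (H2_norm h)); last by exists a.
by rewrite (proj2 (h a b)).
Qed.
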